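(* There is no non-trivial quotient $Q$ of the identity functor on the category of groups such that $Q(G)$ is perfect for every group $G$; nor one such that $Q(G)$ is free for every group $G$; nor one such that $Q(G)$ is either trivial or non-abelian for every group $G$.
   Context: A quotient of the identity functor on the category of groups is a functor $Q$ together with a natural transformation $q:\mathrm{Id}\to Q$ such that each $q_G:G\to Q(G)$ is surjective. It is non-trivial if $Q(G)\neq 1$ for some group $G$. A group is perfect if it equals its commutator subgroup. *)

(* Defs.v *)
Set Implicit Arguments.

Record Group := MkGroup {
  carrier :> Type;
  gmul : carrier -> carrier -> carrier;
  gone : carrier;
  ginv : carrier -> carrier;
  gmul_assoc : forall x y z, gmul x (gmul y z) = gmul (gmul x y) z;
  gmul_1l : forall x, gmul gone x = x;
  gmul_1r : forall x, gmul x gone = x;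
  gmul_Vl : forall x, gmul (ginv x) x = gone;
  gmul_Vr : forall x, gmul x (ginv x) = gone
}.
Arguments gmul {g} _ _.
Arguments gone {g}.
Arguments ginv {g} _.

Record Hom (G H : Group) := MkHom {
  hom_fun :> G -> H;
  hom_mul : forall x y, hom_fun (gmul x y) = gmul (hom_fun x) (hom_fun y)
}.

Definition id_hom (G : Group) : Hom G G :=
  @MkHom G G (fun x => x) (fun x y => eq_refl).

Definition comp_hom (G H K : Group) (g : Hom H K) (f : Hom G H) : Hom G K.
Proof.
  refine (@MkHom G K (fun x => g (f x)) _).
  intros x y. rewrite (hom_mul f), (hom_mul g). reflexivity.
Defined.

(* A quotient of the identity functor on the category of groups:
   a functor Q : Grp -> Grp together with a natural transformation
   q : Id -> Q all of whose components are surjective. *)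
Record QuotientOfId := MkQuot {
  Qobj : Group -> Group;
  Qmap : forall G H : Group, Hom G H -> Hom (Qobj G) (Qobj H);
  Qmap_id : forall (G : Group) (x : Qobj G), Qmap (id_hom G) x = x;
  Qmap_comp : forall (G H K : Group) (f : Hom G H) (g : Hom H K) (x : Qobj G),
      Qmap (comp_hom g f) x = Qmap g (Qmap f x);
  qnat : forall G : Group, Hom G (Qobj G);
  qnat_natural : forall (G H : Group) (f : Hom G H) (x : G),
      qnat H (f x) = Qmap f (qnat G x);
  qnat_surj : forall (G : Group) (y : Qobj G), exists x : G, qnat G x = y
}.

Definition trivial_group (G : Group) : Prop := forall x : G, x = gone.

Definition nontrivial_quot (Q : QuotientOfId) : Prop :=
  exists G : Group, ~ trivial_group (Qobj Q G).

Definition commg {G : Group} (a b : G) : G :=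
  gmul (gmul (gmul (ginv a) (ginv b)) a) b.

(* The commutator subgroup: the subgroup generated by all commutators,
   i.e. the finite products of commutators (inverses of commutators are
   commutators). *)
Inductive in_commutator_subgroup (G : Group) : G -> Prop :=
| ics_one : in_commutator_subgroup G gone
| ics_mul : forall (a b x : G), in_commutator_subgroup G x ->
    in_commutator_subgroup G (gmul (commg a b) x).

Definition perfect (G : Group) : Prop :=
  forall x : G, in_commutator_subgroup G x.

Definition free_group (G : Group) : Prop :=
  exists (X : Type) (i : X -> G),
    forall (H : Group) (f : X -> H),
      (exists phi : Hom G H, forall x, phi (i x) = f x) /\
      (forall phi psi : Hom G H,
          (forall x, phi (i x) = psi (i x)) -> forall g, phi g = psi g).

Definition abelian (G : Group) : Prop := forall x y : G, gmul x y = gmul y x.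

Definition trivial_or_nonabelian (G : Group) : Prop :=
  trivial_group G \/ ~ abelian G.

(* Main.v *)
Require Import Defs.
From Stdlib Require Import ZArith Lia Classical ClassicalEpsilon.
Open Scope Z_scope.

Definition Zg : Group.
Proof. refine (@MkGroup Z Z.add 0%Z Z.opp _ _ _ _ _); intros; lia. Defined.

Definition ZZg : Group.
Proof.
  refine (@MkGroup (Z*Z) (fun u v => (fst u + fst v, snd u + snd v)) (0,0)
     (fun u => (- fst u, - snd u)) _ _ _ _ _);
  intros; repeat match goal with p : (Z*Z)%type |- _ => destruct p end;
  simpl; f_equal; lia.
Defined.

Definition Dg : Group.
Proof.
  refine (@MkGroup (bool*Z)
     (fun u v => (xorb (fst u) (fst v), snd u + (if fst u then - snd v else snd v)))
     (false,0)
     (fun u => (fst u, if fst u then snd u else - snd u)) _ _ _ _ _);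
  intros; repeat match goal with p : (bool*Z)%type |- _ => destruct p as [[] ?] end;
  simpl; f_equal; lia.
Defined.

Lemma hom_one (G H : Group) (f : Hom G H) : f gone = gone.
Proof.
  assert (E : f gone = gmul (f gone) (f gone)).
  { rewrite <- hom_mul, gmul_1l. reflexivity. }
  assert (E2 : gmul (ginv (f gone)) (f gone) = gmul (ginv (f gone)) (gmul (f gone) (f gone))).
  { rewrite <- E. reflexivity. }
  rewrite gmul_assoc, gmul_Vl, gmul_1l in E2. symmetry; exact E2.
Qed.

Arguments hom_one {G H} f.

Definition triv_hom (G H : Group) : Hom G H :=
  @MkHom G H (fun _ => gone) (fun x y => eq_sym (gmul_1l H gone)).

Section Pow.
Variable G : Group.
Fixpoint pw (g : G) (n : nat) : G := match n with O => gone | S k => gmul (pw g k) g end.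
Fixpoint nw (g : G) (n : nat) : G := match n with O => gone | S k => gmul (nw g k) (ginv g) end.
Definition zpow (g : G) (z : Z) : G :=
  if Z.leb 0 z then pw g (Z.to_nat z) else nw g (Z.to_nat (- z)).

Lemma zpow_succ g z : zpow g (z + 1) = gmul (zpow g z) g.
Proof.
  unfold zpow. destruct (Z.leb_spec 0 z).
  - replace (Z.leb 0 (z+1)) with true by (symmetry; apply Z.leb_le; lia).
    replace (Z.to_nat (z+1)) with (S (Z.to_nat z)) by lia. reflexivity.
  - destruct (Z.eqb_spec z (-1)).
    + subst. simpl. rewrite gmul_1l, gmul_Vl. reflexivity.
    + replace (Z.leb 0 (z+1)) with false by (symmetry; apply Z.leb_gt; lia).
      replace (Z.to_nat (- z)) with (S (Z.to_nat (- (z+1)))) by lia.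
      simpl. rewrite <- gmul_assoc, gmul_Vl, gmul_1r. reflexivity.
Qed.

Lemma zpow_pred g z : zpow g (z - 1) = gmul (zpow g z) (ginv g).
Proof.
  replace z with ((z - 1) + 1) at 2 by lia.
  rewrite zpow_succ, <- gmul_assoc, gmul_Vr, gmul_1r. reflexivity.
Qed.

Lemma zpow_add g m n : zpow g (m + n) = gmul (zpow g m) (zpow g n).
Proof.
  induction n using Z.peano_ind.
  - rewrite Z.add_0_r. unfold zpow at 3. simpl. rewrite gmul_1r. reflexivity.
  - rewrite <- Z.add_1_r, Z.add_assoc, !zpow_succ, IHn, gmul_assoc. reflexivity.
  - rewrite <- Z.sub_1_r, Z.add_sub_assoc, !zpow_pred, IHn, gmul_assoc. reflexivity.
Qed.

Definition zhom (g : G) : Hom Zg G := @MkHom Zg G (zpow g) (zpow_add g).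

Lemma zhom_1 g : zhom g 1 = g.
Proof. simpl. unfold zpow. simpl. apply gmul_1l. Qed.
End Pow.
Arguments zhom {G} g.
Arguments zhom_1 {G} g.

Lemma hom_Z_lin (f : Hom Zg Zg) k : @eq Z (f k) (k * f 1).
Proof.
  induction k using Z.peano_ind.
  - exact (hom_one f).
  - pose proof (hom_mul f k 1) as M. simpl in M.
    rewrite <- Z.add_1_r, M, IHk. ring.
  - pose proof (hom_mul f (Z.pred k) 1) as M. simpl in M.
    replace (Z.pred k + 1) with k in M by lia.
    rewrite IHk in M. lia.
Qed.

Definition inj1 : Hom Zg ZZg := @MkHom Zg ZZg (fun k => (k, 0)) (fun x y => eq_refl).
Definition inj2 : Hom Zg ZZg := @MkHom Zg ZZg (fun k => (0, k)) (fun x y => eq_refl).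
Definition pi1 : Hom ZZg Zg := @MkHom ZZg Zg fst (fun x y => eq_refl).
Definition pi2 : Hom ZZg Zg := @MkHom ZZg Zg snd (fun x y => eq_refl).

Lemma hom_ZZ_lin (h : Hom ZZg Zg) m n : @eq Z (h (m, n)) (m * h (1, 0) + n * h (0, 1)).
Proof.
  assert (E : @eq Z (h (m, n)) (h (m, 0) + h (0, n))).
  { pose proof (hom_mul h (m,0) (0,n)) as M. simpl in M.
    rewrite Z.add_0_r in M. exact M. }
  rewrite E.
  pose proof (hom_Z_lin (comp_hom h inj1) m) as A.
  pose proof (hom_Z_lin (comp_hom h inj2) n) as B.
  simpl in A, B. rewrite A, B. reflexivity.
Qed.

Definition sc_hom (G : Group) (k : Z) (f : Hom G Zg) : Hom G Zg.
Proof.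
  refine (@MkHom G Zg (fun y => k * f y) _).
  intros x y. rewrite hom_mul. simpl. ring.
Defined.

Section QQ.
Variable Q : QuotientOfId.

Lemma Q_abel (A : Group) : abelian A -> abelian (Qobj Q A).
Proof.
  intros HA y z.
  destruct (qnat_surj Q A y) as [u <-]. destruct (qnat_surj Q A z) as [v <-].
  rewrite <- !hom_mul, HA. reflexivity.
Qed.

Lemma Q_Z_nontriv : nontrivial_quot Q -> qnat Q Zg 1 <> gone.
Proof.
  intros [G HG] Hc. apply HG. intros y.
  destruct (qnat_surj Q G y) as [g <-].
  rewrite <- (zhom_1 g), qnat_natural, Hc. apply hom_one.
Qed.
End QQ.

Lemma Zg_abel : abelian Zg.
Proof. intros x y. simpl. lia. Qed.

Lemma ZZg_abel : abelian ZZg.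
Proof. intros [a b] [c d]. simpl. f_equal; lia. Qed.

Lemma comm_abel (G : Group) (x : G) : abelian G -> in_commutator_subgroup G x -> x = gone.
Proof.
  intros HA H. induction H.
  - reflexivity.
  - rewrite IHin_commutator_subgroup, gmul_1r. unfold commg.
    rewrite (HA (ginv a) (ginv b)), <- (gmul_assoc _ (ginv b) (ginv a) a), gmul_Vl,
      gmul_1r, gmul_Vl. reflexivity.
Qed.

Lemma part2 (Q : QuotientOfId) : nontrivial_quot Q -> (forall G, free_group (Qobj Q G)) -> False.
Proof.
  intros Hnt Hfree.
  pose proof (Q_Z_nontriv Q Hnt) as Hc.
  set (c := qnat Q Zg 1) in *.
  destruct (Hfree Zg) as [Y [j Hj]].
  destruct (proj1 (Hj Zg (fun _ => 1))) as [r Hr].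
  assert (Hrc : r c <> 0).
  { destruct (classic (exists y : Y, True)) as [[y _]|Hne].
    - destruct (qnat_surj Q Zg (j y)) as [k Hk].
      pose proof (Hr y) as E. rewrite <- Hk in E.
      pose proof (hom_Z_lin (comp_hom r (qnat Q Zg)) k) as L. simpl in L.
      fold c in L. rewrite L in E. intro H0. rewrite H0 in E. lia.
    - exfalso. apply Hc.
      apply (proj2 (Hj _ (fun y => j y)) (id_hom _) (triv_hom _ _)).
      intros y. exfalso. apply Hne. exists y. exact I. }
  destruct (Hfree ZZg) as [X [i Hi]].

  set (a := qnat Q ZZg (1,0)). set (b := qnat Q ZZg (0,1)).
  set (p1 := comp_hom r (Qmap Q pi1)). set (p2 := comp_hom r (Qmap Q pi2)).
  assert (Hz : r (qnat Q Zg 0) = 0).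
  { change (r (qnat Q Zg gone) = gone). rewrite !hom_one. reflexivity. }
  assert (p1a : p1 a = r c).
  { unfold p1, a. simpl. rewrite <- qnat_natural. reflexivity. }
  assert (p1b : p1 b = 0).
  { unfold p1, b. simpl. rewrite <- qnat_natural. exact Hz. }
  assert (p2a : p2 a = 0).
  { unfold p2, a. simpl. rewrite <- qnat_natural. exact Hz. }
  assert (p2b : p2 b = r c).
  { unfold p2, b. simpl. rewrite <- qnat_natural. reflexivity. }
  assert (FA : abelian (Qobj Q ZZg)) by (apply Q_abel, ZZg_abel).
  destruct (classic (exists x : X, True)) as [[x _]|Hne].
  2:{ apply Hrc. rewrite <- p1a.
      apply (proj2 (Hi _ (fun z => p1 (i z))) p1 (triv_hom _ _)).
      intros z. exfalso. apply Hne. exists z. exact I. }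
  set (e := i x).
  assert (Hsub : forall z, i z = e).
  { intros z. apply NNPP. intros Hneq.
    assert (zx : z <> x) by (intros ->; apply Hneq; reflexivity).
    destruct (proj1 (Hi Dg (fun w => if excluded_middle_informative (w = x)
                                     then ((true,0) : Dg) else ((false,1) : Dg))))
      as [phi Hphi].
    pose proof (FA e (i z)) as C.
    apply (f_equal phi) in C. rewrite !hom_mul in C.
    unfold e in C. rewrite !Hphi in C.
    destruct (excluded_middle_informative (x = x)); [|congruence].
    destruct (excluded_middle_informative (z = x)); [congruence|].
    simpl in C. inversion C. }
  destruct (proj1 (Hi Zg (fun _ => 1))) as [phi Hphi].
  assert (L : forall (psi : Hom (Qobj Q ZZg) Zg) y, @eq Z (psi y) (psi e * phi y)).
  { intros psi y.
    apply (proj2 (Hi Zg (fun z => psi e)) psi (sc_hom (Qobj Q ZZg) (psi e) phi)).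
    intros z. simpl. rewrite Hphi, Hsub. symmetry; apply Z.mul_1_r. }
  pose proof (L p1 a) as A1. pose proof (L p1 b) as B1.
  pose proof (L p2 a) as A2. pose proof (L p2 b) as B2.
  rewrite p1a in A1. rewrite p1b in B1. rewrite p2a in A2. rewrite p2b in B2.
  assert (pa : phi a = 0).
  { symmetry in A2. destruct (proj1 (Z.mul_eq_0 _ _) A2) as [h|h]; [|exact h].
    rewrite h in B2. simpl in B2. contradiction. }
  assert (pb : phi b = 0).
  { symmetry in B1. destruct (proj1 (Z.mul_eq_0 _ _) B1) as [h|h]; [|exact h].
    rewrite h in A1. simpl in A1. contradiction. }
  destruct (qnat_surj Q ZZg e) as [[m n] Hmn].
  pose proof (hom_ZZ_lin (comp_hom phi (qnat Q ZZg)) m n) as LL. simpl in LL.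
  fold a b in LL. rewrite Hmn, pa, pb in LL.
  pose proof (Hphi x) as H1. fold e in H1. lia.
Qed.

Theorem corollary3p14 :
  (~ exists Q : QuotientOfId,
       nontrivial_quot Q /\ forall G : Group, perfect (Qobj Q G)) /\
  (~ exists Q : QuotientOfId,
       nontrivial_quot Q /\ forall G : Group, free_group (Qobj Q G)) /\
  (~ exists Q : QuotientOfId,
       nontrivial_quot Q /\ forall G : Group, trivial_or_nonabelian (Qobj Q G)).
Proof.
  split; [|split].
  - intros [Q [Hnt Hp]]. apply (Q_Z_nontriv Q Hnt).
    apply comm_abel; [apply Q_abel, Zg_abel | apply Hp].
  - intros [Q [Hnt Hf]]. exact (part2 Q Hnt Hf).
  - intros [Q [Hnt Ht]]. destruct (Ht Zg) as [T|N].
    + apply (Q_Z_nontriv Q Hnt). apply T.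
    + apply N, Q_abel, Zg_abel.
Qed.
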